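(* Let $\varphi$ be a SaSTL formula (as defined in the context), let $\omega,\omega'$ be spatio-temporal signals over the same $\mathbb{T}$, $L$ and $X$, and let $t\in\mathbb{T}$, $l\in L$. Write $\|\omega-\omega'\|_\infty=\sup_{t_0\in\mathbb{T},\,l_0\in L,\,x\in X}|\pi_x(\omega)[t_0,l_0]-\pi_x(\omega')[t_0,l_0]|$. If $(\omega,t,l)\models\varphi$ and $\|\omega-\omega'\|_\infty<\rho(\varphi,\omega,t,l)$, then $(\omega',t,l)\models\varphi$.
   Context: Time domain $\mathbb{T}=\mathbb{R}_{\ge 0}$. $L$ is a finite nonempty set of locations. $G=(L,E,\eta)$ is a weighted undirected graph with edge weights $\eta:E\to\mathbb{R}_{\ge0}$; the distance $d(l,l')$ is the minimum, over all paths $\sigma$ between $l$ and $l'$, of $\sum_{e\in\sigma}\eta(e)$ (and $+\infty$ if there is no path). $X=\{x_1,\dots,x_n\}$ is a set of signal variables. A spatio-temporal signal is a function $\omega:\mathbb{T}\times L\to\mathbb{R}^n$; $\pi_{x}(\omega)[t,l]\in\mathbb{R}$ denotes its component for variable $x\in X$ at time $t$ and location $l$. $P$ is a finite set of propositions and $\mathcal{L}:L\to 2^P$ a labeling. Location formulas are $\psi::=\top\mid p\mid\neg\psi\mid\psi\vee\psi$ ($p\in P$), with $\mathcal{L}(l)\models\psi$ defined in the usual propositional way. A spatial domain is $\mathcal{D}=([d_1,d_2],\psi)$ with $0\le d_1\le d_2\le+\infty$. For $l\in L$ let $L^l_{\mathcal{D}}=\{l'\in L: d_1\le d(l,l')\le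 d_2,\ \mathcal{L}(l')\models\psi\}$. Standing assumption: for every spatial domain $\mathcal{D}$ occurring in the formula and every $l\in L$, $L^l_{\mathcal{D}}\neq\emptyset$. Let $\alpha^x_{\mathcal{D}}(\omega,t,l)$ be the (nonempty, finite) multiset $\{\pi_x(\omega)[t,l'] : l'\in L^l_{\mathcal{D}}\}$, and for $\mathrm{op}\in\{\max,\min,\mathrm{sum},\mathrm{avg}\}$ let $\mathrm{op}(\cdot)$ be its maximum, minimum, sum, or arithmetic mean. SaSTL syntax: $\varphi::= x>c \mid \neg\varphi\mid \varphi_1\wedge\varphi_2\mid\varphi_1\vee\varphi_2\mid \varphi_1\,\mathcal{U}_I\,\varphi_2\mid \mathcal{A}^{\mathrm{op}}_{\mathcal{D}}x>c\mid \mathcal{C}^{\mathrm{op}}_{\mathcal{D}}\varphi>c$, where $x\in X$, $c\in\mathbb{R}$, $I\subseteq\mathbb{R}_{>0}$ is a nonempty interval, $\mathrm{op}\in\{\max,\min,\mathrm{sum},\mathrm{avg}\}$. For counting formulas $\mathcal{C}^{\mathrm{op}}_{\mathcal{D}}\varphi>c$ it is assumed that $0\le c<1$ if $\mathrm{op}\in\{\max,\min,\mathrm{avg}\}$ and $0\le c<|L^l_{\mathcal{D}}|$ for all $l\in L$ if $\mathrm{op}=\mathrm{sum}$. Boolean semantics: $(\omega,t,l)\models x>c$ iff $\pi_x(\omega)[t,l]>c$; $\neg,\wedge,\vee$ as usual; $(\omega,t,l)\models\varphi_1\mathcal{U}_I\varphi_2$ iff there is $t'\in(t+I)\cap\mathbb{T}$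 with $(\omega,t',l)\models\varphi_2$ and $(\omega,t'',l)\models\varphi_1$ for all $t''\in(t,t')$ (open interval); $(\omega,t,l)\models\mathcal{A}^{\mathrm{op}}_{\mathcal{D}}x>c$ iff $\mathrm{op}(\alpha^x_{\mathcal{D}}(\omega,t,l))>c$; $(\omega,t,l)\models\mathcal{C}^{\mathrm{op}}_{\mathcal{D}}\varphi>c$ iff $\mathrm{op}(\{g(l'):l'\in L^l_{\mathcal{D}}\})>c$ (multiset), where $g(l')=1$ if $(\omega,t,l')\models\varphi$ and $g(l')=0$ otherwise. Quantitative semantics (robustness, values in $\mathbb{R}\cup\{\pm\infty\}$, with $\inf\emptyset=+\infty$): $\rho(x>c,\omega,t,l)=\pi_x(\omega)[t,l]-c$; $\rho(\neg\varphi)=-\rho(\varphi)$; $\rho(\varphi_1\wedge\varphi_2)=\min\{\rho(\varphi_1),\rho(\varphi_2)\}$; $\rho(\varphi_1\vee\varphi_2)=\max\{\rho(\varphi_1),\rho(\varphi_2)\}$ (all at the same $\omega,t,l$); $\rho(\varphi_1\mathcal{U}_I\varphi_2,\omega,t,l)=\sup_{t'\in(t+I)\cap\mathbb{T}}\min\{\rho(\varphi_2,\omega,t',l),\ \inf_{t''\in(t,t')}\rho(\varphi_1,\omega,t'',l)\}$; $\rho(\mathcal{A}^{\mathrm{sum}}_{\mathcal{D}}x>c,\omega,t,l)=\big(\mathrm{sum}(\alpha^x_{\mathcal{D}}(\omega,t,l))-c\big)/|\alpha^x_{\mathcal{D}}(\omega,t,l)|$ and $\rho(\mathcal{A}^{\mathrm{op}}_{\mathcal{D}}x>c,\omega,t,l)=\mathrm{op}(\alpha^x_{\mathcal{D}}(\omega,t,l))-c$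 for $\mathrm{op}\in\{\max,\min,\mathrm{avg}\}$. For counting, let $R=\{\rho(\varphi,\omega,t,l'):l'\in L^l_{\mathcal{D}}\}$ (multiset) and let $\delta(k,R)$ denote the $k$-th largest element of $R$ counted with multiplicity; then $\rho(\mathcal{C}^{\max}_{\mathcal{D}}\varphi>c)=\max R$, $\rho(\mathcal{C}^{\min}_{\mathcal{D}}\varphi>c)=\min R$, $\rho(\mathcal{C}^{\mathrm{sum}}_{\mathcal{D}}\varphi>c)=\delta(\lfloor c\rfloor+1,R)$, $\rho(\mathcal{C}^{\mathrm{avg}}_{\mathcal{D}}\varphi>c)=\delta(\lfloor c\,|L^l_{\mathcal{D}}|\rfloor+1,R)$. *)

(* Defs.v *)
From HB Require Import structures.
From mathcomp Require Import all_boot all_order all_algebra.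
From mathcomp Require Import all_classical all_reals ereal.

Set Implicit Arguments. Unset Strict Implicit. Unset Printing Implicit Defensive.
Import Order.TTheory GRing.Theory Num.Theory.
Local Open Scope ring_scope.
Local Open Scope classical_set_scope.

Inductive lform (P : Type) :=
| LTop | LProp of P | LNeg of lform P | LOr of lform P & lform P.
Arguments LTop {P}.

Fixpoint lsat (P : Type) (lp : P -> bool) (psi : lform P) : bool :=
  match psi with
  | LTop => true
  | LProp p => lp p
  | LNeg psi1 => ~~ lsat lp psi1
  | LOr psi1 psi2 => lsat lp psi1 || lsat lp psi2
  end.

Inductive aop := OMax | OMin | OSum | OAvg.

Record sdomain (R : realType) (P : Type) :=
  SDom { dom_d1 : \bar R; dom_d2 : \bar R; dom_psi : lform P }.

Inductive sform (R : realType) (X P : Type) :=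
| FAtom of X & R                                      (* x > c *)
| FNeg of sform R X P
| FAnd of sform R X P & sform R X P
| FOr of sform R X P & sform R X P
| FUntil of interval R & sform R X P & sform R X P
| FAgg of aop & sdomain R P & X & R                   (* A^op_D x > c *)
| FCount of aop & sdomain R P & sform R X P & R.       (* C^op_D phi > c *)

(* max / min of a (nonempty) list; x0 only used for the empty list *)
Definition smax d (T : orderType d) (x0 : T) (s : seq T) : T :=
  foldr Order.max (head x0 s) s.
Definition smin d (T : orderType d) (x0 : T) (s : seq T) : T :=
  foldr Order.min (head x0 s) s.

Section SaSTL.
Variables (R : realType) (L X P : finType).
(* weighted undirected graph: edge relation adj, weights eta (on edges) *)
Variable adj : rel L.
Variable eta : L -> L -> R.
Variable lab : L -> P -> bool.

(* weight of the path x :: p *)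
Fixpoint pweight (x : L) (p : seq L) : R :=
  match p with
  | [::] => 0
  | y :: p' => eta x y + pweight y p'
  end.

Definition gdist (l l' : L) : \bar R :=
  ereal_inf [set (pweight l p)%:E | p in [set p : seq L | path adj l p /\ last l p = l']].

Definition LD (l : L) (D : sdomain R P) : {set L} :=
  [set l' : L | ((dom_d1 D <= gdist l l')%E && (gdist l l' <= dom_d2 D)%E)
                && lsat (lab l') (dom_psi D)].

Definition aggr (op : aop) (s : seq R) : R :=
  match op with
  | OMax => smax 0 s
  | OMin => smin 0 s
  | OSum => \sum_(a <- s) a
  | OAvg => (\sum_(a <- s) a) / (size s)%:R
  end.

(* kth_largest s k = delta(k+1, s): the (k+1)-th largest element (with multiplicity) *)
Definition kth_largest (s : seq (\bar R)) (k : nat) : \bar R :=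
  nth (-oo)%E (sort (fun a b => (b <= a)%E) s) k.

Definition wf_dom (D : sdomain R P) : Prop :=
  (0 <= dom_d1 D)%E /\ (dom_d1 D <= dom_d2 D)%E /\ forall l : L, (0 < #|LD l D|)%N.

Fixpoint wf (f : sform R X P) : Prop :=
  match f with
  | FAtom _ _ => True
  | FNeg f1 => wf f1
  | FAnd f1 f2 => wf f1 /\ wf f2
  | FOr f1 f2 => wf f1 /\ wf f2
  | FUntil J f1 f2 =>
      (exists r : R, r \in J) /\ (forall r : R, r \in J -> 0 < r) /\ wf f1 /\ wf f2
  | FAgg _ D _ _ => wf_dom D
  | FCount op D f1 c =>
      wf_dom D /\ wf f1 /\ 0 <= c /\
      match op with
      | OSum => forall l : L, c < (#|LD l D|)%:R
      | _ => c < 1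
      end
  end.

Section Signal.
Variable omega : R -> L -> X -> R.  (* pi_x(omega)[t,l] = omega t l x *)

Fixpoint sat (f : sform R X P) (t : R) (l : L) : Prop :=
  match f with
  | FAtom x c => c < omega t l x
  | FNeg f1 => ~ sat f1 t l
  | FAnd f1 f2 => sat f1 t l /\ sat f2 t l
  | FOr f1 f2 => sat f1 t l \/ sat f2 t l
  | FUntil J f1 f2 =>
      exists t', (t' - t \in J) /\ 0 <= t' /\ sat f2 t' l /\
                 (forall t'', t < t'' -> t'' < t' -> sat f1 t'' l)
  | FAgg op D x c => c < aggr op [seq omega t l' x | l' <- enum (LD l D)]
  | FCount op D f1 c =>
      c < aggr op [seq (if `[< sat f1 t l' >] then 1 else 0) | l' <- enum (LD l D)]
  end.

Fixpoint rob (f : sform R X P) (t : R) (l : L) : \bar R :=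
  match f with
  | FAtom x c => (omega t l x - c)%:E
  | FNeg f1 => (- rob f1 t l)%E
  | FAnd f1 f2 => Order.min (rob f1 t l) (rob f2 t l)
  | FOr f1 f2 => Order.max (rob f1 t l) (rob f2 t l)
  | FUntil J f1 f2 =>
      ereal_sup [set Order.min (rob f2 t' l)
                   (ereal_inf [set rob f1 t'' l | t'' in [set t'' : R | t < t'' < t']])
                | t' in [set t' : R | (t' - t \in J) /\ 0 <= t']]
  | FAgg op D x c =>
      let s := [seq omega t l' x | l' <- enum (LD l D)] in
      match op with
      | OSum => ((aggr OSum s - c) / (size s)%:R)%:E
      | _ => (aggr op s - c)%:E
      end
  | FCount op D f1 c =>
      let s := [seq rob f1 t l' | l' <- enum (LD l D)] in
      match op with
      | OMax => smax (-oo)%E s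
      | OMin => smin (+oo)%E s
      | OSum => kth_largest s `|Num.floor c|%N
      | OAvg => kth_largest s `|Num.floor (c * (#|LD l D|)%:R)|%N
      end
  end.

End Signal.
End SaSTL.

Definition sup_dist (R : realType) (L X : Type) (omega omega' : R -> L -> X -> R) : \bar R :=
  ereal_sup [set e : \bar R | exists t0 l0 x, 0 <= t0 /\
                 e = (`|omega t0 l0 x - omega' t0 l0 x|)%:E].

(* Main.v *)
Require Import Defs.
From HB Require Import structures.
From mathcomp Require Import all_boot all_order all_algebra.
From mathcomp Require Import all_classical all_reals ereal.
From mathcomp Require Import lra.

Set Implicit Arguments. Unset Strict Implicit. Unset Printing Implicit Defensive.
Import Order.TTheory GRing.Theory Num.Theory.
Local Open Scope ring_scope.

Lemma foldr_max_spec d (T : orderType d) (h : T) (s : seq T) :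
  (foldr Order.max h s = h \/ foldr Order.max h s \in s) /\
  (h <= foldr Order.max h s)%O /\ (forall a, a \in s -> (a <= foldr Order.max h s)%O).
Proof.
elim: s => [|a s [IH1 [IH2 IH3]]] /=; first by split; [left|split].
set y := foldr _ h s in IH1 IH2 IH3 *.
split; last split.
- rewrite /Order.max; case: ifP => _; last by right; rewrite mem_head.
  by case: IH1 => [->|H]; [left|right; rewrite in_cons H orbT].
- by rewrite le_max IH2 orbT.
- move=> b; rewrite in_cons => /orP [/eqP ->|Hb]; first by rewrite le_max lexx.
  by rewrite le_max IH3 ?orbT.
Qed.

Lemma foldr_min_spec d (T : orderType d) (h : T) (s : seq T) :
  (foldr Order.min h s = h \/ foldr Order.min h s \in s) /\
  (foldr Order.min h s <= h)%O /\ (forall a, a \in s -> (foldr Order.min h s <= a)%O).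
Proof.
elim: s => [|a s [IH1 [IH2 IH3]]] /=; first by split; [left|split].
set y := foldr _ h s in IH1 IH2 IH3 *.
split; last split.
- rewrite /Order.min; case: ifP => _; first by right; rewrite mem_head.
  by case: IH1 => [->|H]; [left|right; rewrite in_cons H orbT].
- by rewrite ge_min IH2 orbT.
- move=> b; rewrite in_cons => /orP [/eqP ->|Hb]; first by rewrite ge_min lexx.
  by rewrite ge_min IH3 ?orbT.
Qed.

Lemma smax_spec d (T : orderType d) (x0 : T) s : s != [::] ->
  smax x0 s \in s /\ forall a, a \in s -> (a <= smax x0 s)%O.
Proof.
case: s => [//|b s] _; rewrite /smax /=.
have [H1 [H2 H3]] := foldr_max_spec (Order.max b (foldr Order.max b s)) (b :: s).
have [G1 [G2 G3]] := foldr_max_spec b s.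
split.
- rewrite /Order.max; case: ifP => _; last by rewrite mem_head.
  by case: G1 => [->|H]; rewrite in_cons ?eqxx ?H ?orbT.
- move=> a; rewrite in_cons => /orP [/eqP ->|Ha]; first by rewrite le_max lexx.
  by rewrite le_max G3 ?orbT.
Qed.

Lemma smin_spec d (T : orderType d) (x0 : T) s : s != [::] ->
  smin x0 s \in s /\ forall a, a \in s -> (smin x0 s <= a)%O.
Proof.
case: s => [//|b s] _; rewrite /smin /=.
have [G1 [G2 G3]] := foldr_min_spec b s.
split.
- rewrite /Order.min; case: ifP => _; first by rewrite mem_head.
  by case: G1 => [->|H]; rewrite in_cons ?eqxx ?H ?orbT.
- move=> a; rewrite in_cons => /orP [/eqP ->|Ha]; first by rewrite ge_min lexx.
  by rewrite ge_min G3 ?orbT.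
Qed.

Section Cnt.
Variable R : realType.
Definition geR : rel (\bar R) := fun a b => (b <= a)%E.
Lemma geR_trans : transitive geR.
Proof. by move=> y x z /= H1 H2; rewrite /geR (le_trans H2 H1). Qed.
Lemma geR_total : total geR.
Proof. by move=> a b; rewrite /geR le_total. Qed.

Variable p : pred (\bar R).
Hypothesis p_up : forall a b, (a <= b)%E -> p a -> p b.

Lemma cnt_ge (ss : seq (\bar R)) : sorted geR ss ->
  forall k, (k < size ss)%N -> p (nth -oo%E ss k) -> (k < count p ss)%N.
Proof.
elim: ss => [//|a ss IH] /= Hp [|k] Hk /= Hn.
  by rewrite Hn.
have Hs : sorted geR ss by case: ss Hp {IH Hk Hn} => //= b ss /andP [].
have Hall := order_path_min geR_trans Hp.
have Ha : p a.
  apply: (p_up _ Hn); move/allP: Hall; apply; exact: mem_nth.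
by rewrite Ha /= add1n ltnS IH.
Qed.

Lemma cnt_le (ss : seq (\bar R)) : sorted geR ss ->
  forall k, ~~ p (nth -oo%E ss k) -> (count p ss <= k)%N.
Proof.
elim: ss => [//|a ss IH] /= Hp [|k] /= Hn.
  have Hall := order_path_min geR_trans Hp.
  rewrite (negbTE Hn) add0n leqn0 eqn0Ngt -has_count; apply/hasPn => b Hb.
  apply/negP => Hpb; move/negP: Hn; apply; apply: (p_up _ Hpb).
  by move/allP: Hall; apply.
have Hs : sorted geR ss by case: ss Hp {IH Hn} => //= b ss /andP [].
by rewrite -add1n; apply: leq_add; [case: (p a)|apply: IH].
Qed.

Lemma cnt_sort_ge (s : seq (\bar R)) k : (k < size s)%N ->
  p (kth_largest s k) -> (k < count p s)%N.
Proof.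
move=> Hk Hp.
have Hperm : perm_eq (sort geR s) s by rewrite perm_sort perm_refl.
rewrite -((permP Hperm) p); apply: cnt_ge => //.
- exact: sort_sorted geR_total s.
- by rewrite size_sort.
Qed.

Lemma cnt_sort_le (s : seq (\bar R)) k :
  ~~ p (kth_largest s k) -> (count p s <= k)%N.
Proof.
move=> Hp.
have Hperm : perm_eq (sort geR s) s by rewrite perm_sort perm_refl.
rewrite -((permP Hperm) p); apply: cnt_le => //.
exact: sort_sorted geR_total s.
Qed.
End Cnt.

Lemma sum_ind (R : realType) (T : Type) (b : pred T) (e : seq T) :
  \sum_(a <- [seq (if b y then 1 else 0) | y <- e]) a = (count b e)%:R :> R.
Proof.
elim: e => [|y e IH]; first by rewrite big_nil.
by rewrite /= big_cons IH natrD; case: (b y); rewrite ?add0r.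
Qed.

Lemma sum_close (R : realType) (T : Type) (f g : T -> R) (del : R) (e : seq T) :
  (forall y, `|f y - g y| <= del) ->
  \sum_(a <- [seq f y | y <- e]) a - (size e)%:R * del <= \sum_(a <- [seq g y | y <- e]) a /\
  \sum_(a <- [seq g y | y <- e]) a <= \sum_(a <- [seq f y | y <- e]) a + (size e)%:R * del.
Proof.
move=> H; elim: e => [|y e [IH1 IH2]]; first by rewrite !big_nil mul0r; lra.
rewrite /= !big_cons -addn1 natrD.
have := H y; rewrite ler_norml => /andP [H1 H2].
split; lra.
Qed.

Lemma floor_facts (R : realType) (c : R) : 0 <= c ->
  ((`|Num.floor c|%N)%:R <= c) /\ (c < (`|Num.floor c|%N).+1%:R).
Proof.
move=> Hc.
have E : (`|Num.floor c|%N)%:R = (Num.floor c)%:~R :> R.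
  by rewrite natr_absz ger0_norm // floor_ge0.
split; first by rewrite E floor_le.
by rewrite -addn1 natrD E -(intrD _ _ 1) floorD1_gt.
Qed.

Lemma map_ne (T U : eqType) (f : T -> U) (s : seq T) : s != [::] -> map f s != [::].
Proof. by case: s. Qed.

Section Key.
Variables (R : realType) (L X P : finType) (adj : rel L) (eta : L -> L -> R)
  (lab : L -> P -> bool) (omega omega' : R -> L -> X -> R) (del : R).
Hypothesis Hd : forall t0 l0 x, 0 <= t0 -> `|omega t0 l0 x - omega' t0 l0 x| <= del.

Local Notation rb := (rob adj eta lab omega).
Local Notation st' := (sat adj eta lab omega').

Lemma key (f : sform R X P) : forall t l, 0 <= t -> wf adj eta lab f ->
  ((del%:E < rb f t l)%E -> st' f t l) /\ ((del%:E < - rb f t l)%E -> ~ st' f t l).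
Proof.
elim: f => [x c|f1 IH1|f1 IH1 f2 IH2|f1 IH1 f2 IH2|J f1 IH1 f2 IH2|op D x c|op D f1 IH1 c]
  t l Ht /= Hw.
- have := Hd l x Ht; rewrite ler_norml => /andP [H1 H2].
  split => H; rewrite -?EFinN ?lte_fin in H; [lra|move=> H3; lra].
- by have [H1 H2] := IH1 t l Ht Hw; rewrite oppeK; split => [/H2 //|H Hn]; apply: Hn; apply: H1.
- case: Hw => Hw1 Hw2.
  have [A1 A2] := IH1 t l Ht Hw1; have [B1 B2] := IH2 t l Ht Hw2.
  split; first by rewrite lt_min => /andP [/A1 ? /B1 ?].
  by rewrite oppe_min lt_max => /orP [/A2 H|/B2 H] [].
- case: Hw => Hw1 Hw2.
  have [A1 A2] := IH1 t l Ht Hw1; have [B1 B2] := IH2 t l Ht Hw2.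
  split; first by rewrite lt_max => /orP [/A1 ?|/B1 ?]; [left|right].
  by rewrite oppe_max lt_min => /andP [/A2 ? /B2 ?] [].
- case: Hw => _ [_ [Hw1 Hw2]]; split.
  + move=> /ereal_sup_gt [a [t' [Hj Ht'0] Ea] Ha].
    move: Ha; rewrite -Ea lt_min => /andP [H2 H1].
    exists t'; split => //; split => //; split; first by apply: (IH2 t' l Ht'0 Hw2).1.
    move=> t'' Ht1 Ht2.
    have Ht'' : 0 <= t'' by apply: ltW; apply: le_lt_trans Ht Ht1.
    apply: (IH1 t'' l Ht'' Hw1).1; apply: (lt_le_trans H1).
    by apply: ereal_inf_lbound; exists t'' => //=; rewrite Ht1 Ht2.
  + rewrite lteNr => H [t' [Hj [Ht'0 [Hs2 Hs1]]]].
    have Hle : (Order.min (rb f2 t' l) (ereal_inf [set rb f1 t'' l | t'' in [set t'' | (t < t'' < t')%R]]) <= ereal_sup [set Order.min (rb f2 t'0 l)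
        (ereal_inf [set rb f1 t'' l | t'' in [set t'' | (t < t'' < t'0)%R]])
        | t'0 in [set t'0 | ((t'0 - t)%R \in J) /\ (0 <= t'0)%R]])%E.
      by apply: ereal_sup_ubound; exists t'.
    have := le_lt_trans Hle H; rewrite gt_min => /orP [Hr|Hr].
    * by apply: (IH2 t' l Ht'0 Hw2).2 Hs2; rewrite lteNr.
    * have [y [t'' /andP [Ht1 Ht2] Ey] Hy] := ereal_inf_lt Hr.
      have Ht'' : 0 <= t'' by apply: ltW; apply: le_lt_trans Ht Ht1.
      apply: (IH1 t'' l Ht'' Hw1).2 (Hs1 t'' Ht1 Ht2).
      by rewrite lteNr Ey.
- case: Hw => _ [_ Hcard].
  have hn : (0 < size (enum (LD adj eta lab l D)))%N by rewrite -cardE.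
  set e := enum (LD adj eta lab l D) in hn *.
  have ne : e != [::] by case: (e) hn.
  have Hc : forall y, `|omega t y x - omega' t y x| <= del by move=> y; apply: Hd.
  have [S1 S2] := sum_close e Hc.
  set n := (size e)%:R in S1 S2.
  have n0 : 0 < n by rewrite /n ltr0n.
  case: op => /=.
  + have [M1 M2] := smax_spec 0 (map_ne (fun y => omega t y x) ne).
    have [N1 N2] := smax_spec 0 (map_ne (fun y => omega' t y x) ne).
    split.
    * rewrite lte_fin => H.
      have [y Hy Ey] := mapP M1.
      have := N2 _ (map_f (fun y => omega' t y x) Hy).
      have := Hc y; rewrite ler_norml => /andP [H1 H2] H3. lra.
    * rewrite -?EFinN lte_fin => H H0.
      have [y Hy Ey] := mapP N1.
      have := M2 _ (map_f (fun y => omega t y x) Hy).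
      have := Hc y; rewrite ler_norml => /andP [H1 H2] H3; rewrite Ey in H0. lra.
  + have [M1 M2] := smin_spec 0 (map_ne (fun y => omega t y x) ne).
    have [N1 N2] := smin_spec 0 (map_ne (fun y => omega' t y x) ne).
    split.
    * rewrite lte_fin => H.
      have [y Hy Ey] := mapP N1.
      have := M2 _ (map_f (fun y => omega t y x) Hy).
      have := Hc y; rewrite ler_norml => /andP [H1 H2] H3; rewrite Ey. lra.
    * rewrite -?EFinN lte_fin => H H0.
      have [y Hy Ey] := mapP M1.
      have := N2 _ (map_f (fun y => omega' t y x) Hy).
      have := Hc y; rewrite ler_norml => /andP [H1 H2] H3; rewrite Ey in H. lra.
  + rewrite !size_map -/n; split.
    * rewrite lte_fin ltr_pdivlMr // => H. nra.
    * rewrite -?EFinN lte_fin -mulNr ltr_pdivlMr // => H H0. nra.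
  + rewrite !size_map -/n; split.
    * rewrite lte_fin ltr_pdivlMr // => H.
      have : del + c < (\sum_(a <- [seq omega t y x | y <- e]) a) / n by lra.
      rewrite ltr_pdivlMr //. nra.
    * rewrite -?EFinN lte_fin ltr_pdivlMr // => H.
      have : (\sum_(a <- [seq omega t y x | y <- e]) a) / n < c - del by lra.
      rewrite ltr_pdivrMr //. nra.
- case: Hw => [[_ [_ Hcard]] [Hw1 [Hc0 Hcond]]].
  have hn : (0 < size (enum (LD adj eta lab l D)))%N by rewrite -cardE.
  rewrite cardE.
  set e := enum (LD adj eta lab l D) in hn *.
  have ne : e != [::] by case: (e) hn.
  have IH y := IH1 t y Ht Hw1.
  have Hb1 y : (del%:E < rb f1 t y)%E -> `[< st' f1 t y >] = true.
    by move=> H; apply: asboolT; apply: (IH y).1.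
  have Hb2 y : (del%:E < - rb f1 t y)%E -> `[< st' f1 t y >] = false.
    by move=> H; apply: asboolF; apply: (IH y).2.
  have up1 : forall a b : \bar R, (a <= b)%E -> (del%:E < a)%E -> (del%:E < b)%E.
    by move=> a b hab h; apply: lt_le_trans hab.
  have up2 : forall a b : \bar R, (a <= b)%E -> (- del%:E <= a)%E -> (- del%:E <= b)%E.
    by move=> a b hab h; apply: le_trans hab.
  have Cpos k : (del%:E < kth_largest [seq rb f1 t y | y <- e] k)%E ->
      (k < count (fun y => `[< st' f1 t y >]) e)%N.
    move=> H.
    have Hk : (k < size [seq rb f1 t y | y <- e])%N.
      case: (ltnP k (size [seq rb f1 t y | y <- e])) => // Hk.
      by move: H; rewrite /kth_largest nth_default ?size_sort // ltNge leNye.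
    have := cnt_sort_ge up1 Hk H; rewrite count_map => H1.
    apply: (leq_trans H1); apply: sub_count => y /=; exact: Hb1.
  have Cneg k : (del%:E < - kth_largest [seq rb f1 t y | y <- e] k)%E ->
      (count (fun y => `[< st' f1 t y >]) e <= k)%N.
    rewrite lteNr => H.
    have Hp : ~~ (- del%:E <= kth_largest [seq rb f1 t y | y <- e] k)%E by rewrite -ltNge.
    have := cnt_sort_le up2 Hp; rewrite count_map => H1.
    apply: leq_trans H1; apply: sub_count => y /= /asboolP Hs.
    rewrite leNgt; apply/negP => Hlt; apply: (IH y).2 Hs; by rewrite lteNr.
  case: op Hcond => /= Hcond.
  + split.
    * move=> H.
      have [M1 _] := smax_spec -oo%E (map_ne (fun y => rb f1 t y) ne).
      have [y Hy Ey] := mapP M1; rewrite Ey in H.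
      have [_ N2] := smax_spec 0 (map_ne (fun y => if `[< st' f1 t y >] then (1:R) else 0) ne).
      have := N2 _ (map_f (fun y => if `[< st' f1 t y >] then (1:R) else 0) Hy).
      rewrite /= Hb1 // => H1. lra.
    * rewrite lteNr => H.
      have [_ M2] := smax_spec -oo%E (map_ne (fun y => rb f1 t y) ne).
      have Hall y : y \in e -> `[< st' f1 t y >] = false.
        move=> Hy; apply: Hb2; rewrite lteNr; apply: le_lt_trans H.
        exact: (M2 _ (map_f (fun y => rb f1 t y) Hy)).
      have [N1 _] := smax_spec 0 (map_ne (fun y => if `[< st' f1 t y >] then (1:R) else 0) ne).
      have [y Hy ->] := mapP N1; rewrite /= Hall // => H1. lra.
  + split.
    * move=> H.
      have [_ M2] := smin_spec +oo%E (map_ne (fun y => rb f1 t y) ne).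
      have Hall y : y \in e -> `[< st' f1 t y >] = true.
        move=> Hy; apply: Hb1; apply: lt_le_trans H _.
        exact: (M2 _ (map_f (fun y => rb f1 t y) Hy)).
      have [N1 _] := smin_spec 0 (map_ne (fun y => if `[< st' f1 t y >] then (1:R) else 0) ne).
      have [y Hy ->] := mapP N1; by rewrite /= Hall.
    * move=> H.
      have [M1 _] := smin_spec +oo%E (map_ne (fun y => rb f1 t y) ne).
      have [y Hy Ey] := mapP M1; rewrite Ey in H.
      have [_ N2] := smin_spec 0 (map_ne (fun y => if `[< st' f1 t y >] then (1:R) else 0) ne).
      have := N2 _ (map_f (fun y => if `[< st' f1 t y >] then (1:R) else 0) Hy).
      rewrite /= Hb2 // => H1 H2. lra.
  + rewrite (sum_ind _ (fun y => `[< st' f1 t y >])).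
    have [F1 F2] := floor_facts Hc0.
    split.
    * move/Cpos; rewrite -(ler_nat R) => H. lra.
    * move/Cneg; rewrite -(ler_nat R) => H H'. lra.
  + rewrite (sum_ind _ (fun y => `[< st' f1 t y >])) size_map.
    have n0 : 0 < (size e)%:R :> R by rewrite ltr0n.
    have cn0 : 0 <= c * (size e)%:R by apply: mulr_ge0 => //; apply: ltW.
    have [F1 F2] := floor_facts cn0.
    rewrite ltr_pdivlMr //.
    split.
    * move/Cpos; rewrite -(ler_nat R) => H. lra.
    * move/Cneg; rewrite -(ler_nat R) => H H'. lra.
Qed.
End Key.

Theorem theorem2 (R : realType) (L X P : finType)
  (adj : rel L) (eta : L -> L -> R) (lab : L -> P -> bool)
  (adj_sym : symmetric adj)
  (eta_sym : forall a b : L, eta a b = eta b a)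
  (eta_ge0 : forall a b : L, adj a b -> (0 <= eta a b)%R)
  (phi : sform R X P) (Hwf : wf adj eta lab phi)
  (omega omega' : R -> L -> X -> R) (t : R) (l : L) (Ht : (0 <= t)%R) :
  sat adj eta lab omega phi t l ->
  (sup_dist omega omega' < rob adj eta lab omega phi t l)%E ->
  sat adj eta lab omega' phi t l.
Proof.
move=> _.
have Hub : forall t0 l0 x, 0 <= t0 ->
    ((`|omega t0 l0 x - omega' t0 l0 x|)%:E <= sup_dist omega omega')%E.
  by move=> t0 l0 x H0; apply: ereal_sup_ubound; exists t0, l0, x.
case Ed: (sup_dist omega omega') => [r| |].
- move=> H.
  have Hd : forall t0 l0 x, 0 <= t0 -> `|omega t0 l0 x - omega' t0 l0 x| <= r.
    by move=> t0 l0 x H0; have := Hub t0 l0 x H0; rewrite Ed lee_fin.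
  exact: (@key R L X P adj eta lab omega omega' r Hd phi t l Ht Hwf).1.
- by rewrite ltNge leey.
- have Hd : forall del t0 l0 x, 0 <= t0 -> `|omega t0 l0 x - omega' t0 l0 x| <= del.
    by move=> del t0 l0 x H0; have := Hub t0 l0 x H0; rewrite Ed leeNy_eq.
  case Er: (rob adj eta lab omega phi t l) => [s| |] H.
  + apply: (@key R L X P adj eta lab omega omega' (s - 1) (Hd _) phi t l Ht Hwf).1.
    by rewrite Er lte_fin; lra.
  + by apply: (@key R L X P adj eta lab omega omega' 0 (Hd _) phi t l Ht Hwf).1; rewrite Er ltry.
  + by move: H; rewrite ltxx.
Qed.
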